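(* Let $G$ be a second countable locally compact Hausdorff groupoid with a fixed left Haar system $\lambda=\{\lambda^u\}_{u\in G^0}$, and let $(\Phi,\Psi)$ be a complementary pair of $N$-functions with $\Phi\in\Delta_2$. If $\sup_{u\in G^0}\lambda^u(G)<\infty$, then $I_0^\Phi(G,\lambda)\subseteq I(G,\lambda)$ and $E_0^\Phi\subseteq E^1$. In particular, this holds if $G$ is compact.
   Context: $G^0$ is the unit space, $r(x)=xx^{-1}$, $d(x)=x^{-1}x$, $G^u=r^{-1}(u)$; the left Haar system consists of positive Radon measures $\lambda^u$ with support $G^u$, $u\mapsto\int f d\lambda^u$ continuous for $f\in C_c(G)$, and $\int f(xy)d\lambda^{d(x)}(y)=\int f(y)d\lambda^{r(x)}(y)$. An $N$-function is a continuous even convex $\Phi:\mathbb R\to[0,\infty)$ with $\Phi(x)=0$ iff $x=0$, $\Phi(x)/x\to0$ as $x\to0$, $\to\infty$ as $x\to\infty$; complementary function $\Psi(y)=\sup_{x\ge0}(x|y|-\Phi(x))$. $\Phi\in\Delta_2$: there is $k>0$ with $\Phi(2x)\le k\Phi(x)$ for all $x\ge0$ ($G$ non-compact), resp. for $x\ge x_0$, some $x_0>0$ ($G$ compact). $L^\Phi(G^u)$: measurable $f$ on $G^u$ with $\int\Phi(\alpha|f|)d\lambda^u<\infty$ for some $\alpha>0$, gauge norm $\|f\|^0_\Phi=\inf\{k>0:\int\Phi(|f|/k)d\lambda^u\le1\}$. For $f\in C_c(G)$, $f^u=f|_{G^u}$. $I_0^\Phi(G,\lambda)$ is the space of bounded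 sections $\xi=(\xi^u)_{u\in G^0}$, $\xi^u\in L^\Phi(G^u)$, $\sup_u\|\xi^u\|^0_\Phi<\infty$ (not necessarily continuous); $I(G,\lambda)$ is the space of sections with $\xi^u\in L^1(G^u,\lambda^u)$ and $\sup_u\|\xi^u\|_1<\infty$. $E_0^\Phi$ is the space of $\xi\in I_0^\Phi(G,\lambda)$ which are locally close to $C_c(G)$ (for each $u_0$, $\varepsilon>0$ there are $f\in C_c(G)$ and a neighbourhood $V$ of $u_0$ with $\|\xi^v-f^v\|^0_\Phi<\varepsilon$ on $V$) and with $u\mapsto\|\xi^u\|^0_\Phi$ vanishing at infinity; $E^1$ is defined analogously with the $L^1(\lambda^u)$-norms in place of $\|\cdot\|^0_\Phi$. *)

(* Defs.v *)
From HB Require Import structures.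
From mathcomp Require Import all_boot all_order all_algebra.
From mathcomp Require Import all_classical all_reals all_analysis.
Set Implicit Arguments. Unset Strict Implicit. Unset Printing Implicit Defensive.
Import Order.TTheory GRing.Theory Num.Theory.
Import numFieldNormedType.Exports.
Local Open Scope classical_set_scope.
Local Open Scope ring_scope.

Record groupoid (T : Type) := Groupoid {
  comp : T -> T -> Prop;
  gmul : T -> T -> T;               (* product, meaningful on G^(2) *)
  ginv : T -> T;
  ginvK : forall x, ginv (ginv x) = x;
  comp_inv : forall x, comp (ginv x) x;
  gmulA : forall x y z, comp x y -> comp y z ->
     [/\ comp (gmul x y) z, comp x (gmul y z) &
         gmul (gmul x y) z = gmul x (gmul y z)];
  gmul_cancel : forall x y, comp x y ->
     gmul (ginv x) (gmul x y) = y /\ gmul (gmul x y) (ginv y) = x }.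

Section GroupoidDefs.
Context {T : Type} (G : groupoid T).
Definition rg (x : T) := gmul G x (ginv G x).
Definition dg (x : T) := gmul G (ginv G x) x.
Definition G0 : set T := [set u | exists x, u = rg x].
Definition Gu (u : T) : set T := [set x | rg x = u].
End GroupoidDefs.

Definition lch_groupoid (T : topologicalType) (G : groupoid T) : Prop :=
  [/\ @second_countable T, hausdorff_space T, locally_compact [set: T],
      {within [set p : T * T | comp G p.1 p.2],
         continuous (fun p : T * T => gmul G p.1 p.2)}
    & continuous (ginv G)].

Notation borelT T := (g_sigma_algebraType (@open T)).

Section Measures.
Context {R : realType} {T : ptopologicalType}.
Local Open Scope ereal_scope.

Definition radon (mu : {measure set (borelT T) -> \bar R}) : Prop :=
  [/\ (forall K : set T, compact K -> mu K < +oo),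
      (forall A : set T, measurable (A : set (borelT T)) ->
          mu A = ereal_inf [set mu U | U in [set U : set T | open U /\ A `<=` U]])
    & (forall U : set T, open U ->
          mu U = ereal_sup [set mu K | K in [set K : set T | compact K /\ K `<=` U]])].

Definition msupport (mu : {measure set (borelT T) -> \bar R}) : set T :=
  [set x | forall U : set T, open U -> U x -> 0 < mu U].

Definition Cc (f : T -> R) : Prop :=
  continuous f /\ compact (closure [set x | f x != 0%R]).
End Measures.

Section Haar.
Local Open Scope ereal_scope.
Definition haar_system {R : realType} {T : ptopologicalType} (G : groupoid T)
  (lam : T -> {measure set (borelT T) -> \bar R}) : Prop :=
  [/\ (forall u, G0 G u -> radon (lam u) /\ msupport (lam u) = Gu G u),
      (forall f : T -> R, Cc f ->
         {within G0 G, continuous (fun u => fine (\int[lam u]_x (f x)%:E))})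
    & (forall (f : T -> R) (x : T), Cc f ->
         \int[lam (dg G x)]_(y in Gu G (dg G x)) (f (gmul G x y))%:E
         = \int[lam (rg G x)]_y (f y)%:E)].
End Haar.

Section Nfun.
Context {R : realType}.
Definition N_function (Phi : R -> R) : Prop :=
  [/\ continuous Phi,
      (forall x, Phi (- x) = Phi x),
      (forall x, 0 <= Phi x),
      (forall x, Phi x = 0 <-> x = 0) &
   [/\
      (forall x y t, 0 <= t <= 1 ->
          Phi (t * x + (1 - t) * y) <= t * Phi x + (1 - t) * Phi y),
      (fun x => Phi x / x) x @[x --> 0^'] --> 0
    & (fun x => Phi x / x) x @[x --> +oo] --> +oo]].

Definition compl_fun (Phi : R -> R) : R -> R :=
  fun y => sup [set x * `|y| - Phi x | x in [set x : R | 0 <= x]].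

(* Delta_2 condition; [cpt] says whether G is compact *)
Definition Delta2 (cpt : Prop) (Phi : R -> R) : Prop :=
  (~ cpt -> exists k, 0 < k /\ forall x, 0 <= x -> Phi (2 * x) <= k * Phi x) /\
  (cpt -> exists k x0, [/\ 0 < k, 0 < x0 &
            forall x, x0 <= x -> Phi (2 * x) <= k * Phi x]).
End Nfun.

Section Sections.
Context {R : realType} {T : ptopologicalType} (G : groupoid T)
  (lam : T -> {measure set (borelT T) -> \bar R}).
Local Open Scope ereal_scope.

Definition in_LPhi (Phi : R -> R) (u : T) (f : T -> R) : Prop :=
  measurable_fun (Gu G u : set (borelT T)) f /\
  exists alpha : R, (0 < alpha)%R /\
    \int[lam u]_(x in Gu G u) (Phi (alpha * `|f x|))%:E < +oo.

Definition gauge_norm (Phi : R -> R) (u : T) (f : T -> R) : \bar R :=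
  ereal_inf [set k%:E | k in [set k : R | (0 < k)%R /\
     \int[lam u]_(x in Gu G u) (Phi (`|f x| / k))%:E <= 1]].

Definition L1_norm (u : T) (f : T -> R) : \bar R :=
  \int[lam u]_(x in Gu G u) (`|f x|)%:E.

(* sections are functions on G: xi^u is the restriction of xi to G^u *)
Definition I0Phi (Phi : R -> R) : set (T -> R) :=
  [set xi | (forall u, G0 G u -> in_LPhi Phi u xi) /\
            exists M : R, forall u, G0 G u -> gauge_norm Phi u xi <= M%:E].

Definition I1 : set (T -> R) :=
  [set xi | (forall u, G0 G u ->
               measurable_fun (Gu G u : set (borelT T)) xi /\
               (lam u).-integrable (Gu G u) (EFin \o xi)) /\
            exists M : R, forall u, G0 G u -> L1_norm u xi <= M%:E].

Definition loc_close_Cc (N : T -> (T -> R) -> \bar R) (xi : T -> R) : Prop :=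
  forall u0, G0 G u0 -> forall eps : R, (0 < eps)%R ->
    exists f : T -> R, Cc f /\ exists V : set T, [/\ open V, V u0 &
      forall v, V v -> G0 G v -> N v (xi \- f)%R < eps%:E].

Definition vanish_infty (N : T -> (T -> R) -> \bar R) (xi : T -> R) : Prop :=
  forall eps : R, (0 < eps)%R -> exists K : set T,
    [/\ compact K, K `<=` G0 G &
        forall u, G0 G u -> ~ K u -> N u xi < eps%:E].

Definition E0Phi (Phi : R -> R) : set (T -> R) :=
  [set xi | I0Phi Phi xi /\ loc_close_Cc (gauge_norm Phi) xi /\
            vanish_infty (gauge_norm Phi) xi].

Definition E1 : set (T -> R) :=
  [set xi | I1 xi /\ loc_close_Cc L1_norm xi /\ vanish_infty L1_norm xi].
End Sections.

(* Main.v *)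
Set Warnings "-all".
Require Import Defs.
From HB Require Import structures.
From mathcomp Require Import all_boot all_order all_algebra.
From mathcomp Require Import all_classical all_reals all_analysis.
From mathcomp Require Import measurable_realfun.
Import Order.TTheory GRing.Theory Num.Theory.
Import numFieldNormedType.Exports.
Local Open Scope classical_set_scope.
Local Open Scope ring_scope.

Lemma msupport_closed (R : realType) (T : ptopologicalType)
  (mu : {measure set (borelT T) -> \bar R}) : closed (msupport mu).
Proof.
rewrite -[msupport mu]setCK; apply: open_closedC.
rewrite openE => x /= nx.
have [U [oU Ux nU]] : exists U : set T, [/\ open U, U x & ~ (0 < mu U)%E].
  apply: contra_notP nx => H U oU Ux; apply: contra_notP H => H.
  by exists U.
rewrite /interior; apply: (@filterS _ _ _ U).
  move=> y Uy /=; move=> /(_ U oU Uy); exact: nU.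
by apply: open_nbhs_nbhs; split.
Qed.

Lemma closed_borel (T : ptopologicalType) (A : set T) :
  closed A -> measurable (A : set (borelT T)).
Proof.
move=> cA; rewrite -[A]setCK; apply: measurableC.
apply: sub_gen_smallest; exact: closed_openC.
Qed.

Lemma cont_borel_meas (R : realType) (T : ptopologicalType) (f : T -> R)
  (D : set (borelT T)) : continuous f -> measurable_fun D f.
Proof.
move=> cf mD; apply: (measurability _ (RGenOpens.measurableE R)) => //.
move=> _ [_ [a [b ->]] <-]; apply: measurableI => //.
apply: sub_gen_smallest; apply: open_comp => // ? _; exact: cf.
Qed.
Lemma key (R : realType) (T : ptopologicalType)
  (mu : {measure set (borelT T) -> \bar R}) (D : set (borelT T))
  (Phi : R -> R) (t0 Ml k : R) (f : T -> R) :
  measurable D -> continuous Phi -> (forall x, 0 <= Phi x) ->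
  0 <= t0 -> (forall x, 0 <= x -> x <= Phi x + t0) ->
  0 <= Ml -> (mu D <= Ml%:E)%E ->
  measurable_fun D f -> 0 < k ->
  (\int[mu]_(x in D) (Phi (`|f x| / k))%:E <= 1)%E ->
  (\int[mu]_(x in D) (`|f x|)%:E <= (k * (1 + t0 * Ml))%:E)%E.
Proof.
move=> mD cPhi Phi0 t00 Ht0 Ml0 muD mf k0 HI.
have mP : measurable_fun D (fun x => Phi (`|f x| / k)).
  change (measurable_fun D (Phi \o (fun x => `|f x| / k))).
  apply: measurableT_comp; first exact: continuous_measurable_fun.
  apply: measurable_funM => //.
  change (measurable_fun D (@Num.norm R R \o f)).
  by apply: measurableT_comp => //; exact: normr_measurable.
have H1 : (\int[mu]_(x in D) (`|f x|)%:E <= \int[mu]_(x in D) (k%:E * ((Phi (`|f x| / k))%:E + t0%:E)))%E.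
  apply: ge0_le_integral => //.
  - apply/measurable_EFinP; change (measurable_fun D (@Num.norm R R \o f)).
    by apply: measurableT_comp => //; exact: normr_measurable.
  - apply: emeasurable_funM => //.
    apply: emeasurable_funD => //; exact/measurable_EFinP.
  - move=> x Dx; rewrite -EFinD -EFinM lee_fin.
    have := Ht0 (`|f x| / k) (divr_ge0 (normr_ge0 _) (ltW k0)).
    move=> H; rewrite -(ler_pM2l k0) in H.
    by rewrite mulrCA divff ?gt_eqF // mulr1 in H.
apply: le_trans H1 _.
rewrite ge0_integralZl_EFin //; last 3 first.
- by move=> x Dx; rewrite -EFinD lee_fin addr_ge0.
- apply: emeasurable_funD => //; exact/measurable_EFinP.
- exact: ltW.
rewrite ge0_integralD //; last 2 first.
- by move=> x Dx; rewrite lee_fin.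
- exact/measurable_EFinP.
rewrite (integral_cst mu mD (t0%:E)).
rewrite EFinM; apply: lee_wpmul2l; first by rewrite lee_fin ltW.
rewrite EFinD; apply: leeD => //.
rewrite EFinM; apply: lee_wpmul2l => //; by rewrite lee_fin.
Qed.
Lemma rg_cont (T : ptopologicalType) (G : groupoid T) :
  lch_groupoid G -> continuous (rg G).
Proof.
case=> _ _ _ hmul hinv x.
set g := fun y : T => (y, ginv G y).
have Ag : forall y, Defs.comp G (g y).1 (g y).2.
  by move=> y /=; have := comp_inv G (ginv G y); rewrite ginvK.
have cg : g @ x --> g x.
  apply: cvg_pair => //=; exact: hinv.
have := (proj1 (subspace_continuousP _ _) hmul) (g x) (Ag x).
move=> hm.
have hw : g @ x --> within [set p : T * T | Defs.comp G p.1 p.2] (nbhs (g x)).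
  move=> P /= WP; have := cg _ WP; rewrite /= !nbhs_simpl; apply: (@filterS _ (nbhs x)) => /=. move=> y H; exact: H (Ag y).
exact: (@cvg_comp T (T * T)%type T g (fun p : T * T => gmul G p.1 p.2) (nbhs x) (within [set p : T * T | Defs.comp G p.1 p.2] (nbhs (g x))) (nbhs (rg G x)) hw hm).
Qed.

Lemma t0_ex (R : realType) (Phi : R -> R) : N_function Phi ->
  exists t0, 0 <= t0 /\ forall x, 0 <= x -> x <= Phi x + t0.
Proof.
case=> _ _ P0 _ [_ _ hinf].
have := (proj1 (cvgryPge _) hinf) 1.
move=> [M [_ HM]].
exists `|M|; split => // x x0.
have [xM|Mx] := leP x `|M|.
  by rewrite -[x]add0r; apply: lerD.
have Mlt : M < x by apply: le_lt_trans Mx; exact: ler_norm.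
have xpos : 0 < x by apply: le_lt_trans Mx.
have := HM x Mlt; rewrite ler_pdivlMr // mul1r => H.
by rewrite -[x]addr0; apply: lerD; rewrite ?addr0 // normr_ge0.
Qed.

Lemma bound_compact (R : realType) (T : ptopologicalType) (G : groupoid T)
  (lam : T -> {measure set (borelT T) -> \bar R}) :
  lch_groupoid G -> haar_system G lam -> compact [set: T] ->
  exists M : R, forall u, G0 G u -> (lam u [set: T] <= M%:E)%E.
Proof.
move=> lch [hr hc _] cT.
have crg := @rg_cont T G lch.
have cG0 : compact (G0 G).
  have -> : G0 G = [set rg G x | x in [set: T]].
    apply/seteqP; split => u /=.
      by case=> x ->; exists x.
    by case=> x _ <-; exists x.
  apply: continuous_compact => //; exact: continuous_subspaceT.
have Cc1 : Cc (fun _ : T => 1 : R).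
  split; first by move=> x; exact: cvg_cst.
  have -> : [set x : T | (1 : R) != 0] = setT.
    by apply/seteqP; split => x //= _; exact: oner_neq0.
  by rewrite closureT.
have := hc _ Cc1 => hg.
have := compact_bounded (continuous_compact hg cG0).
rewrite /= => bd.
case: bd => B [_ HB].
exists (`|B| + 1) => u G0u.
have HBu := HB (`|B| + 1) (le_lt_trans (ler_norm B) (ltr_pwDr ltr01 (lexx _))) _ (ex_intro2 _ _ u G0u erefl).
have fin : (lam u [set: T] < +oo)%E.
  by case: (hr u G0u) => [[+ _ _] _] => /(_ _ cT).
have Ie : (\int[lam u]_x (1 : R)%:E = lam u [set: T])%E.
  by rewrite integral_cst // mul1e.
rewrite Ie in HBu.
have h0 : (0 <= lam u [set: T])%E by [].
rewrite -(fineK (x := lam u [set: T])); last by rewrite ge0_fin_numE.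
rewrite lee_fin; exact: le_trans (ler_norm _) HBu.
Qed.

Lemma Gu_meas (R : realType) (T : ptopologicalType) (G : groupoid T)
  (lam : T -> {measure set (borelT T) -> \bar R}) u :
  haar_system G lam -> G0 G u -> measurable (Gu G u : set (borelT T)).
Proof.
case=> hr _ _ G0u; apply: closed_borel.
case: (hr u G0u) => _ <-; exact: msupport_closed.
Qed.

Arguments Gu_meas {R T G lam u}.
Arguments key {R T mu D Phi t0 Ml k f}.
Arguments t0_ex {R Phi}.
Arguments cont_borel_meas {R T f D}.

Theorem lemma3p11 (R : realType) (T : ptopologicalType) (G : groupoid T)
  (lam : T -> {measure set (borelT T) -> \bar R}) (Phi Psi : R -> R) :
  lch_groupoid G -> haar_system G lam ->
  N_function Phi -> Psi = compl_fun Phi ->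
  Delta2 (compact [set: T]) Phi ->
  ((exists M : R, forall u, G0 G u -> (lam u [set: T] <= M%:E)%E)
     \/ compact [set: T]) ->
  I0Phi G lam Phi `<=` I1 G lam /\ E0Phi G lam Phi `<=` E1 G lam.
Proof.
move=> lch haar NF _ _ Hb.
have [M0 HM0] : exists M : R, forall u, G0 G u -> (lam u [set: T] <= M%:E)%E.
  by case: Hb => // cT; exact: bound_compact.
set Ml := `|M0|.
have Ml0 : 0 <= Ml by rewrite /Ml normr_ge0.
have HMl : forall u, G0 G u -> (lam u (Gu G u) <= Ml%:E)%E.
  move=> u G0u; apply: (@le_trans _ _ (lam u [set: T])).
    apply: le_measure => //; rewrite inE //; exact: Gu_meas haar G0u.
  apply: le_trans (HM0 u G0u) _; rewrite lee_fin; exact: ler_norm.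
have [t0 [t00 Ht0]] := t0_ex NF.
have [cPhi _ Phi0 _ _] := NF.
set C := 1 + t0 * Ml.
have C0 : 0 < C by rewrite /C ltr_pwDl // mulr_ge0.
have L1b : forall u eta (e : R), G0 G u ->
    measurable_fun (Gu G u : set (borelT T)) eta ->
    (gauge_norm G lam Phi u eta < e%:E)%E -> (L1_norm G lam u eta < (e * C)%:E)%E.
  move=> u eta e G0u meta /ereal_inf_lt [_ [k [k0 Hk] <-]] ke.
  apply: le_lt_trans.
    exact: (key (Gu_meas haar G0u) cPhi Phi0 t00 Ht0 Ml0 (HMl u G0u) meta k0 Hk).
  by rewrite lte_fin ltr_pM2r // -lte_fin.
have part1 : I0Phi G lam Phi `<=` I1 G lam.
  move=> xi [Hxi [M HM]]; split.
    move=> u G0u; have [mxi _] := Hxi u G0u; split => //.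
    apply/integrableP; split; first exact/measurable_EFinP.
    apply: (@lt_le_trans _ _ ((M + 1) * C)%:E); last by rewrite leey.
    apply: L1b => //; apply: le_lt_trans (HM u G0u) _.
    by rewrite lte_fin ltrDl.
  exists ((M + 1) * C) => u G0u; apply/ltW.
  apply: L1b => //; first by case: (Hxi u G0u).
  apply: le_lt_trans (HM u G0u) _; by rewrite lte_fin ltrDl.
split => //.
move=> xi [I0xi [loc van]]; split; first exact: part1.
have mxi : forall u, G0 G u -> measurable_fun (Gu G u : set (borelT T)) xi.
  by move=> u G0u; case: I0xi => + _ => /(_ u G0u) [].
split.
  move=> u0 G0u0 eps eps0.
  have [f [Ccf [V [oV Vu0 HV]]]] := loc u0 G0u0 (eps / C) (divr_gt0 eps0 C0).
  exists f; split => //; exists V; split => // v Vv G0v.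
  rewrite -[eps](divfK (negbT (gt_eqF C0))).
  apply: L1b => //; last exact: HV.
  apply: measurable_funB; first exact: mxi.
  by apply: cont_borel_meas; case: Ccf.
move=> eps eps0.
have [K [cK KG0 HK]] := van (eps / C) (divr_gt0 eps0 C0).
exists K; split => // u G0u nKu.
rewrite -[eps](divfK (negbT (gt_eqF C0))).
by apply: L1b => //; [exact: mxi | exact: HK].
Qed.
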